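(* For every $n_0>3$ there exist asymptotically polytropic equations of state having $n_0$ as their low-pressure asymptotic index such that some of the corresponding regular perfect fluid solutions have infinite radius (i.e. $p(r)>0$ for all $r>0$).
   Context: Equation of state: a barotropic relation $\rho=\rho(p)$ with $\rho>0$ for $p>0$ and $\eta(p)=\int_0^p dp'/\rho(p')$ finite for $p>0$. Index function: $n(\eta)=\frac{\eta}{\rho}\frac{d\rho}{d\eta}$. Asymptotically polytropic with indices $n_0,n_1$: $n$ bounded and non-negative, $n(\eta)\to n_0$ (with error $O(\eta^{a_0})$, $a_0>0$) as $\eta\to0$ and $n(\eta)\to n_1$ (error $O(\eta^{-a_1})$) as $\eta\to\infty$; the examples in the paper are composite equations of state, with $n(\eta)=n_0$ for $\eta\le\eta_j$ and $n(\eta)=n_1$ (a constant slightly greater than 5) for $\eta>\eta_j$. Regular perfect fluid solution: solution of $dm/dr=4\pi r^2\rho(p)$, $dp/dr=-m\rho(p)/r^2$ with $m\to0$ and $p\to p_c\in(0,\infty)$ as $r\to0$. *)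

(* Defs.v *)
From Stdlib Require Import Reals List.
From Coquelicot Require Import Coquelicot.
Open Scope R_scope.

(* Barotropic equation of state rho = rho(p): rho > 0 for p > 0 and
   eta(p) = int_0^p dp'/rho(p') is finite for p > 0 (improper integral
   at 0, since rho(0) may vanish).  [eta] is the function p |-> eta(p). *)
Definition barotropic_eos (rho eta : R -> R) : Prop :=
  (forall p, 0 < p -> 0 < rho p) /\
  (forall p, 0 < p ->
     is_RInt_gen (fun q => / rho q) (at_right 0) (at_point p) (eta p)).

(* [nf] is the index function n(eta) = (eta/rho) d rho/d eta, where rho is
   viewed as a function [rhoe] of eta (rhoe (eta p) = rho p).  eta ranges over
   all of (0,oo).  rho is continuous in eta and the defining identity
   d rho/d eta = n rho / eta holds at every eta > 0 except finitely many
   (needed for the paper's composite equations of state, whose n jumps). *)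
Definition index_function (rho eta nf : R -> R) : Prop :=
  exists rhoe : R -> R,
    (forall p, 0 < p -> rhoe (eta p) = rho p) /\
    (forall x, 0 < x -> exists p, 0 < p /\ eta p = x) /\
    (forall x, 0 < x -> continuous rhoe x) /\
    exists S : list R, forall x, 0 < x -> ~ In x S ->
      is_derive rhoe x (nf x * rhoe x / x).

Definition asymptotically_polytropic (nf : R -> R) (n0 n1 : R) : Prop :=
  (exists M, forall x, 0 < x -> 0 <= nf x <= M) /\
  (exists a0 C d, 0 < a0 /\ 0 < d /\
     forall x, 0 < x < d -> Rabs (nf x - n0) <= C * Rpower x a0) /\
  (exists a1 C K, 0 < a1 /\
     forall x, K < x -> 0 < x -> Rabs (nf x - n1) <= C * Rpower x (- a1)).

Definition regular_solution_on_halfline (rho m p : R -> R) (pc : R) : Prop :=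
  0 < pc /\
  (forall r, 0 < r ->
     is_derive m r (4 * PI * r ^ 2 * rho (p r)) /\
     is_derive p r (- (m r * rho (p r)) / r ^ 2)) /\
  filterlim m (at_right 0) (locally 0) /\
  filterlim p (at_right 0) (locally pc).

(* Main.v *)
Require Import Defs.
From Stdlib Require Import Reals List Lra ClassicalEpsilon.
From Coquelicot Require Import Coquelicot.
Open Scope R_scope.

Definition aa k := / (k-1).
Definition cc k := aa k / (2*PI).
Definition AA k := cc k * (1 - 2*aa k).
Definition BB k := cc k * (2 + 2*aa k).
Definition rhoe k x := AA k * Rpower x k + BB k * Rpower x (2*k-1).
Definition PP k x := AA k * Rpower x (k+1) / (k+1) + BB k * Rpower x (2*k)/(2*k).

Lemma consts k : 3 < k -> 0 < aa k /\ aa k < /2 /\ 0 < cc k /\ 0 < AA k /\ 0 < BB k.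
Proof.
  intros Hk. unfold AA, BB, cc, aa.
  assert (Ha : 0 < / (k-1)) by (apply Rinv_0_lt_compat; lra).
  assert (Ha2 : / (k-1) < /2) by (apply Rinv_lt_contravar; nra).
  assert (Hc : 0 < / (k-1) / (2*PI)).
  { unfold Rdiv; apply Rmult_lt_0_compat; auto. apply Rinv_0_lt_compat. pose PI_RGT_0; lra. }
  repeat split; auto; apply Rmult_lt_0_compat; auto; lra.
Qed.

Lemma Rpower_pos x e : 0 < Rpower x e.
Proof. unfold Rpower; apply exp_pos. Qed.

Lemma Rpower_S x e : 0 < x -> Rpower x (e+1) = Rpower x e * x.
Proof. intros. rewrite Rpower_plus, Rpower_1; auto. Qed.

Lemma der_pow x e : 0 < x -> is_derive (fun t => Rpower t e) x (e * Rpower x (e-1)).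
Proof. intros. apply is_derive_Reals, derivable_pt_lim_power; auto. Qed.

Lemma der_plus f g x df dg : is_derive f x df -> is_derive g x dg ->
  is_derive (fun t => f t + g t) x (df + dg).
Proof. intros H1 H2. exact (is_derive_plus f g x df dg H1 H2). Qed.

Lemma der_mult f g x df dg : is_derive f x df -> is_derive g x dg ->
  is_derive (fun t => f t * g t) x (df * g x + f x * dg).
Proof. intros H1 H2. exact (is_derive_mult f g x df dg H1 H2 Rmult_comm). Qed.

Lemma der_scal f x c df : is_derive f x df -> is_derive (fun t => c * f t) x (c * df).
Proof. apply is_derive_scal. Qed.

Lemma der_comp f g x df dg : is_derive f (g x) df -> is_derive g x dg ->
  is_derive (fun t => f (g t)) x (dg * df).
Proof. intros H1 H2. exact (is_derive_comp f g x df dg H1 H2). Qed.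

Lemma der_eq (f : R -> R) (x l l' : R) : is_derive f x l -> l = l' -> is_derive f x l'.
Proof. intros H ->; exact H. Qed.

Lemma der_ext (f g : R -> R) (x l : R) : (forall t, f t = g t) -> is_derive f x l -> is_derive g x l.
Proof. intros H. apply is_derive_ext. exact H. Qed.
Lemma rhoe_pos k x : 3 < k -> 0 < rhoe k x.
Proof.
  intros Hk. destruct (consts k Hk) as (_&_&_&HA&HB). unfold rhoe.
  pose proof (Rpower_pos x k); pose proof (Rpower_pos x (2*k-1)).
  apply Rplus_lt_0_compat; apply Rmult_lt_0_compat; auto.
Qed.

Lemma rhoe_der k x : 0 < x ->
  is_derive (rhoe k) x (AA k * (k * Rpower x (k-1)) + BB k * ((2*k-1) * Rpower x (2*k-1-1))).
Proof.
  intros Hx. unfold rhoe. apply der_plus; apply der_scal; apply der_pow; auto.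
Qed.

Lemma rhoe_cont k x : 0 < x -> continuous (rhoe k) x.
Proof. intros Hx. apply (ex_derive_continuous (rhoe k)). eexists. apply rhoe_der; auto. Qed.

Lemma PP_der k x : 3 < k -> 0 < x -> is_derive (PP k) x (rhoe k x).
Proof.
  intros Hk Hx. apply (der_ext (fun t => /(k+1) * (AA k * Rpower t (k+1)) + /(2*k) * (BB k * Rpower t (2*k)))).
  { intros t; unfold PP, Rdiv; ring. }
  eapply der_eq.
  - apply der_plus.
    + apply (der_scal (fun t => AA k * Rpower t (k+1)) x (/(k+1))).
      apply der_scal; apply der_pow; auto.
    + apply (der_scal (fun t => BB k * Rpower t (2*k)) x (/(2*k))).
      apply der_scal; apply der_pow; auto.
  - unfold rhoe. replace (k+1-1) with k by ring. replace (2*k-1) with (2*k-1) by ring.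
    field. lra.
Qed.

Lemma PP_pos k x : 3 < k -> 0 < PP k x.
Proof.
  intros Hk. destruct (consts k Hk) as (_&_&_&HA&HB). unfold PP.
  pose proof (Rpower_pos x (2*k)); pose proof (Rpower_pos x (k+1)).
  assert (0 < /(k+1)) by (apply Rinv_0_lt_compat; lra).
  assert (0 < /(2*k)) by (apply Rinv_0_lt_compat; lra).
  apply Rplus_lt_0_compat; unfold Rdiv; apply Rmult_lt_0_compat; auto;
  apply Rmult_lt_0_compat; auto.
Qed.

Lemma PP_lt k x y : 3 < k -> 0 < x -> x < y -> PP k x < PP k y.
Proof.
  intros Hk Hx Hxy. destruct (consts k Hk) as (_&_&_&HA&HB). unfold PP.
  assert (H1 : Rpower x (k+1) < Rpower y (k+1)) by (apply Rlt_Rpower_l; lra).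
  assert (H2 : Rpower x (2*k) < Rpower y (2*k)) by (apply Rlt_Rpower_l; lra).
  assert (0 < /(k+1)) by (apply Rinv_0_lt_compat; lra).
  assert (0 < /(2*k)) by (apply Rinv_0_lt_compat; lra).
  unfold Rdiv. apply Rplus_lt_compat; apply Rmult_lt_compat_r; auto;
  apply Rmult_lt_compat_l; auto.
Qed.

Lemma PP_le k x y : 3 < k -> 0 < x -> x <= y -> PP k x <= PP k y.
Proof.
  intros Hk Hx [H|H]. left; apply PP_lt; auto. subst; lra.
Qed.

Lemma PP_inj k x y : 3 < k -> 0 < x -> 0 < y -> PP k x = PP k y -> x = y.
Proof.
  intros Hk Hx Hy H. destruct (Rtotal_order x y) as [h|[h|h]]; auto.
  - pose proof (PP_lt k x y Hk Hx h); lra.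
  - pose proof (PP_lt k y x Hk Hy h); lra.
Qed.

Lemma Rpower_ge_x x e : 1 <= x -> 1 <= e -> x <= Rpower x e.
Proof.
  intros Hx He. replace e with ((e-1)+1) by ring. rewrite Rpower_S by lra.
  assert (1 <= Rpower x (e-1)).
  { unfold Rpower.
    assert (0 <= ln x) by (rewrite <- ln_1; apply ln_le; lra).
    assert (H0 : 0 <= (e-1)*ln x) by (apply Rmult_le_pos; lra).
    destruct H0 as [H0|H0]. pose proof (exp_increasing 0 _ H0) as H1; rewrite exp_0 in H1; lra.
    rewrite <- H0, exp_0; lra. }
  nra.
Qed.

Lemma Rpower_le_x x e : 0 < x -> x <= 1 -> 1 <= e -> Rpower x e <= x.
Proof.
  intros Hx0 Hx He. replace e with ((e-1)+1) by ring. rewrite Rpower_S by lra.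
  assert (Rpower x (e-1) <= 1).
  { unfold Rpower.
    assert (ln x <= 0) by (rewrite <- ln_1; apply ln_le; lra).
    assert (H0 : (e-1)*ln x <= 0).
    { replace ((e-1)*ln x) with (-((e-1) * (- ln x))) by ring.
      assert (0 <= (e-1)*(-ln x)) by (apply Rmult_le_pos; lra). lra. }
    destruct H0 as [H0|H0]. pose proof (exp_increasing _ 0 H0) as H1; rewrite exp_0 in H1; lra.
    rewrite H0, exp_0; lra. }
  nra.
Qed.

Lemma PP_cont k x : 3 < k -> 0 < x -> continuous (PP k) x.
Proof. intros Hk Hx. apply (ex_derive_continuous (PP k)). eexists. apply PP_der; auto. Qed.

Lemma PP_surj k q : 3 < k -> 0 < q -> exists x, 0 < x /\ PP k x = q.
Proof.
  intros Hk Hq. destruct (consts k Hk) as (_&_&_&HA&HB).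
  set (C := AA k / (k+1) + BB k / (2*k)).
  assert (HC : 0 < C).
  { unfold C, Rdiv. apply Rplus_lt_0_compat; apply Rmult_lt_0_compat; auto;
    apply Rinv_0_lt_compat; lra. }
  set (x1 := Rmin 1 (q / (2*C))).
  set (x2 := Rmax 1 (q * (k+1) / AA k + 1)).
  assert (Hx1 : 0 < x1).
  { unfold x1, Rmin. destruct Rle_dec. lra. unfold Rdiv; apply Rmult_lt_0_compat; auto.
    apply Rinv_0_lt_compat; lra. }
  assert (Hx1' : x1 <= 1) by (unfold x1; apply Rmin_l).
  assert (Hx1q : x1 <= q/(2*C)) by (unfold x1; apply Rmin_r).
  assert (Hx2 : 1 <= x2) by (unfold x2; apply Rmax_l).
  assert (Hx2' : q * (k+1) / AA k + 1 <= x2) by (unfold x2; apply Rmax_r).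
  assert (Hq1 : 0 < q * (k+1) / AA k).
  { unfold Rdiv; apply Rmult_lt_0_compat; [nra|apply Rinv_0_lt_compat; lra]. }
  assert (P1 : PP k x1 < q).
  { unfold PP. pose proof (Rpower_le_x x1 (k+1) Hx1 Hx1' ltac:(lra)).
    pose proof (Rpower_le_x x1 (2*k) Hx1 Hx1' ltac:(lra)).
    assert (PPle : AA k * Rpower x1 (k + 1) / (k + 1) + BB k * Rpower x1 (2 * k) / (2 * k) <= C * x1).
    { unfold C, Rdiv. 
      assert (0 < /(k+1)) by (apply Rinv_0_lt_compat; lra).
      assert (0 < /(2*k)) by (apply Rinv_0_lt_compat; lra).
      assert (AA k * Rpower x1 (k+1) * / (k+1) <= AA k * x1 * /(k+1)).
      { apply Rmult_le_compat_r; [lra|]. apply Rmult_le_compat_l; lra. }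
      assert (BB k * Rpower x1 (2*k) * / (2*k) <= BB k * x1 * /(2*k)).
      { apply Rmult_le_compat_r; [lra|]. apply Rmult_le_compat_l; lra. }
      nra. }
    assert (C * x1 <= C * (q/(2*C))) by (apply Rmult_le_compat_l; lra).
    replace (C * (q/(2*C))) with (q/2) in H1 by (field; lra). lra. }
  assert (P2 : q < PP k x2).
  { unfold PP. pose proof (Rpower_ge_x x2 (k+1) Hx2 ltac:(lra)).
    assert (0 < BB k * Rpower x2 (2 * k) / (2 * k)).
    { unfold Rdiv; apply Rmult_lt_0_compat; [apply Rmult_lt_0_compat; auto; apply Rpower_pos|apply Rinv_0_lt_compat; lra]. }
    assert (AA k * x2 / (k+1) <= AA k * Rpower x2 (k + 1) / (k + 1)).
    { unfold Rdiv; apply Rmult_le_compat_r; [left; apply Rinv_0_lt_compat; lra|]. apply Rmult_le_compat_l; lra. }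
    assert (q < AA k * x2 / (k+1)).
    { apply Rlt_le_trans with (AA k * (q * (k+1) / AA k + 1) / (k+1)).
      - replace (AA k * (q * (k + 1) / AA k + 1) / (k + 1)) with (q + AA k / (k+1)) by (field; lra).
        assert (0 < AA k / (k+1)) by (unfold Rdiv; apply Rmult_lt_0_compat; auto; apply Rinv_0_lt_compat; lra). lra.
      - unfold Rdiv; apply Rmult_le_compat_r; [left; apply Rinv_0_lt_compat; lra|]. apply Rmult_le_compat_l; lra. }
    lra. }
  destruct (Ranalysis5.IVT_interv (fun t => PP k t - q) x1 x2) as [z [Hz Hz']].
  - intros t Ht. apply continuity_pt_filterlim.
    apply (continuous_minus (PP k) (fun _ => q)). apply PP_cont; lra. apply continuous_const.
  - lra.
  - lra.
  - lra.
  - exists z; split; lra.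
Qed.

Definition etaf k q := epsilon (inhabits 0) (fun x => 0 < x /\ PP k x = q).

Lemma etaf_spec k q : 3 < k -> 0 < q -> 0 < etaf k q /\ PP k (etaf k q) = q.
Proof. intros Hk Hq. unfold etaf. apply epsilon_spec. apply PP_surj; auto. Qed.

Lemma etaf_PP k x : 3 < k -> 0 < x -> etaf k (PP k x) = x.
Proof.
  intros Hk Hx. destruct (etaf_spec k (PP k x) Hk (PP_pos k x Hk)) as [H1 H2].
  apply PP_inj with k; auto.
Qed.

Lemma ballR (x e y : R) : ball x e y <-> Rabs (y - x) < e.
Proof. split; intros H; exact H. Qed.

Lemma etaf_cont k q : 3 < k -> 0 < q -> continuous (etaf k) q.
Proof.
  intros Hk Hq. destruct (etaf_spec k q Hk Hq) as [Hx0 HPx0].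
  set (x0 := etaf k q) in *.
  apply filterlim_locally. intros eps.
  set (e := Rmin eps (x0/2)).
  assert (He : 0 < e) by (unfold e, Rmin; destruct Rle_dec; pose proof (cond_pos eps); lra).
  assert (He1 : e <= eps) by apply Rmin_l.
  assert (He2 : e <= x0/2) by apply Rmin_r.
  assert (L1 : PP k (x0 - e) < q) by (rewrite <- HPx0; apply PP_lt; lra).
  assert (L2 : q < PP k (x0 + e)) by (rewrite <- HPx0; apply PP_lt; lra).
  pose proof (PP_pos k (x0 - e) Hk).
  assert (Hd : 0 < Rmin (PP k (x0+e) - q) (q - PP k (x0-e))).
  { unfold Rmin; destruct Rle_dec; lra. }
  exists (mkposreal _ Hd). intros y Hy. apply ballR in Hy. simpl in Hy.
  pose proof (Rmin_l (PP k (x0+e) - q) (q - PP k (x0-e))).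
  pose proof (Rmin_r (PP k (x0+e) - q) (q - PP k (x0-e))).
  apply Rabs_def2 in Hy. change (minus y q) with (y - q) in Hy. assert (Hy1 : PP k (x0 - e) < y /\ y < PP k (x0 + e)) by lra.
  assert (Hy0 : 0 < y) by lra.
  destruct (etaf_spec k y Hk Hy0) as [Hz HPz].
  apply ballR.
  assert (etaf k y < x0 + e).
  { destruct (Rlt_or_le (etaf k y) (x0 + e)) as [h|h]; auto.
    pose proof (PP_le k (x0+e) (etaf k y) Hk ltac:(lra) h). lra. }
  assert (x0 - e < etaf k y).
  { destruct (Rlt_or_le (x0 - e) (etaf k y)) as [h|h]; auto.
    pose proof (PP_le k (etaf k y) (x0-e) Hk Hz h). lra. }
  apply Rabs_def1; unfold minus, plus, opp; simpl; fold x0; lra.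
Qed.

Definition rhof k q := rhoe k (etaf k q).

Lemma invrho_cont k q : 3 < k -> 0 < q -> continuous (fun q => / rhof k q) q.
Proof.
  intros Hk Hq. unfold rhof. apply continuous_Rinv_comp.
  - apply (continuous_comp (etaf k) (rhoe k)). apply etaf_cont; auto.
    apply rhoe_cont. apply etaf_spec; auto.
  - pose proof (rhoe_pos k (etaf k q) Hk); lra.
Qed.

Lemma int_rho k a b : 3 < k -> 0 < a -> 0 < b ->
  is_RInt (fun q => / rhof k q) a b (etaf k b - etaf k a).
Proof.
  intros Hk Ha Hb.
  destruct (etaf_spec k a Hk Ha) as [Ha1 Ha2].
  destruct (etaf_spec k b Hk Hb) as [Hb1 Hb2].
  set (a' := etaf k a) in *. set (b' := etaf k b) in *.
  assert (Hpos : forall x, Rmin a' b' <= x <= Rmax a' b' -> 0 < x).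
  { intros x Hx. pose proof (Rmin_glb_lt a' b' 0 Ha1 Hb1). 
    unfold Rmin in *. destruct Rle_dec; lra. }
  assert (H1 := is_RInt_comp (fun q => / rhof k q) (PP k) (rhoe k) a' b').
  rewrite Ha2, Hb2 in H1.
  assert (H2 : is_RInt (fun q => / rhof k q) a b (RInt (fun q => / rhof k q) a b)).
  { apply (RInt_correct (V := R_CompleteNormedModule)). apply (ex_RInt_continuous (V := R_CompleteNormedModule)). intros z Hz. apply invrho_cont; auto.
    assert (0 < Rmin a b) by (unfold Rmin; destruct Rle_dec; lra). lra. }
  assert (H3 : is_RInt (fun _ => 1) a' b' (RInt (fun q => / rhof k q) a b)).
  { apply is_RInt_ext with (fun y => scal (rhoe k y) (/ rhof k (PP k y))).
    - intros x Hx. unfold rhof. rewrite etaf_PP; auto.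
      unfold scal; simpl; unfold mult; simpl. field.
      pose proof (rhoe_pos k x Hk); lra.
      apply Hpos; lra.
    - apply H1.
      + intros x Hx. apply invrho_cont; auto. apply PP_pos; auto.
      + intros x Hx. split. apply PP_der; auto. apply rhoe_cont; auto. }
  assert (H4 := is_RInt_const a' b' 1).
  apply (is_RInt_unique (V := R_CompleteNormedModule)) in H3.
  apply (is_RInt_unique (V := R_CompleteNormedModule)) in H4.
  rewrite H3 in H4. rewrite H4 in H2.
  change (is_RInt (fun q : R => / rhof k q) a b (b' - a')).
  replace (b' - a') with (scal (b' - a') (1:R)). exact H2.
  unfold scal; simpl; unfold mult; simpl. ring.
Qed.

Lemma gen_int k p : 3 < k -> 0 < p ->
  is_RInt_gen (fun q => / rhof k q) (at_right 0) (at_point p) (etaf k p).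
Proof.
  intros Hk Hp P [eps HP].
  pose proof (PP_pos k eps Hk) as Hd.
  apply Filter_prod with (fun a => 0 < a < PP k eps) (fun b => b = p).
  - exists (mkposreal _ Hd). intros y Hy Hy0. apply ballR in Hy. simpl in Hy.
    apply Rabs_def2 in Hy. change (minus y 0) with (y - 0) in Hy. lra.
  - reflexivity.
  - intros a b [Ha Ha'] ->. simpl. exists (etaf k p - etaf k a). split.
    + apply int_rho; auto.
    + apply HP. apply ballR. destruct (etaf_spec k a Hk Ha) as [H1 H2].
      assert (etaf k a < eps).
      { destruct (Rlt_or_le (etaf k a) eps) as [h|h]; auto.
        pose proof (PP_le k eps (etaf k a) Hk (cond_pos eps) h). lra. }
      apply Rabs_def1; unfold minus, plus, opp; simpl; lra.
Qed.

Definition nff k x := k + (k-1) * BB k * Rpower x (k-1) / (AA k + BB k * Rpower x (k-1)).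

Lemma rhoe_index k x : 3 < k -> 0 < x -> is_derive (rhoe k) x (nff k x * rhoe k x / x).
Proof.
  intros Hk Hx. destruct (consts k Hk) as (_&_&_&HA&HB).
  eapply der_eq. apply rhoe_der; auto.
  unfold nff, rhoe.
  set (Z := Rpower x (k-1)).
  assert (HZ : 0 < Z) by apply Rpower_pos.
  assert (H1 : Rpower x k = Z * x).
  { unfold Z. rewrite <- Rpower_S by auto. f_equal; ring. }
  assert (H2 : Rpower x (2*k-1-1) = Z * Z).
  { unfold Z. rewrite <- Rpower_plus. f_equal; ring. }
  assert (H3 : Rpower x (2*k-1) = Z * Z * x).
  { rewrite <- H2. rewrite <- Rpower_S by auto. f_equal; ring. }
  rewrite H1, H2, H3. field. split; nra.
Qed.

Lemma nff_asym k : 3 < k -> asymptotically_polytropic (nff k) k (2*k-1).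
Proof.
  intros Hk. destruct (consts k Hk) as (_&_&_&HA&HB). unfold nff.
  assert (F1 : forall x, 0 < x -> 0 <= (k-1) * BB k * Rpower x (k-1) / (AA k + BB k * Rpower x (k-1)) <= k-1).
  { intros x Hx. pose proof (Rpower_pos x (k-1)). split.
    - unfold Rdiv; apply Rmult_le_pos; [|left; apply Rinv_0_lt_compat; nra].
      apply Rmult_le_pos; [|lra]. apply Rmult_le_pos; lra.
    - apply Rmult_le_reg_r with (AA k + BB k * Rpower x (k-1)); [nra|].
      unfold Rdiv; rewrite Rmult_assoc, Rinv_l by nra. nra. }
  split; [|split].
  - exists (2*k-1). intros x Hx. pose proof (F1 x Hx). lra.
  - exists (k-1), ((k-1) * BB k / AA k), 1. split; [lra|split; [lra|]].
    intros x Hx. pose proof (Rpower_pos x (k-1)).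
    replace (k + (k-1) * BB k * Rpower x (k-1) / (AA k + BB k * Rpower x (k-1)) - k)
      with ((k-1) * BB k * Rpower x (k-1) / (AA k + BB k * Rpower x (k-1))) by ring.
    pose proof (F1 x ltac:(lra)). rewrite Rabs_pos_eq by lra.
    replace ((k-1) * BB k / AA k * Rpower x (k-1)) with ((k-1) * BB k * Rpower x (k-1) * / AA k) by (field; lra).
    unfold Rdiv. apply Rmult_le_compat_l.
    + apply Rmult_le_pos; [|lra]. apply Rmult_le_pos; lra.
    + apply Rinv_le_contravar; nra.
  - exists (k-1), ((k-1) * AA k / BB k), 0. split; [lra|].
    intros x _ Hx. rewrite Rpower_Ropp.
    set (Z := Rpower x (k-1)). assert (0 < Z) by apply Rpower_pos.
    replace (k + (k-1) * BB k * Z / (AA k + BB k * Z) - (2*k - 1)) with (- ((k-1) * AA k / (AA k + BB k * Z)))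
      by (field; nra).
    rewrite Rabs_Ropp.
    assert (0 < (k-1) * AA k / (AA k + BB k * Z)).
    { unfold Rdiv; apply Rmult_lt_0_compat; [nra|apply Rinv_0_lt_compat; nra]. }
    rewrite Rabs_pos_eq by lra.
    replace ((k-1) * AA k / BB k * / Z) with ((k-1) * AA k * / (BB k * Z)) by (field; lra).
    unfold Rdiv. apply Rmult_le_compat_l; [nra|]. apply Rinv_le_contravar; nra.
Qed.

Definition etar k r := Rpower (1 + r^2) (- aa k).
Definition msol k r := 2 * aa k * r^3 * Rpower (1 + r^2) (- aa k - 1).
Definition psol k r := PP k (etar k r).

Lemma u_pos r : 0 < 1 + r^2.
Proof. pose proof (pow2_ge_0 r). lra. Qed.

Lemma der_u r : is_derive (fun t => 1 + t^2) r (2 * r).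
Proof. auto_derive; auto. ring. Qed.

Lemma der_upow e r : is_derive (fun t => Rpower (1 + t^2) e) r (2 * r * (e * Rpower (1 + r^2) (e-1))).
Proof.
  apply (der_comp (fun t => Rpower t e) (fun t => 1 + t^2)).
  apply der_pow, u_pos. apply der_u.
Qed.

Lemma der_psol k r : 3 < k ->
  is_derive (psol k) r (2 * r * (- aa k * Rpower (1 + r^2) (- aa k - 1)) * rhoe k (etar k r)).
Proof.
  intros Hk. unfold psol.
  apply (der_comp (PP k) (etar k)). apply PP_der; auto. apply Rpower_pos.
  apply der_upow.
Qed.

Lemma der_msol k r : is_derive (msol k) r
  (2 * aa k * (3 * r^2) * Rpower (1 + r^2) (- aa k - 1) +
   2 * aa k * r^3 * (2 * r * ((- aa k - 1) * Rpower (1 + r^2) (- aa k - 1 - 1)))).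
Proof.
  unfold msol. apply (der_mult (fun t => 2 * aa k * t^3) (fun t => Rpower (1+t^2) (-aa k - 1))).
  - auto_derive; auto. ring.
  - apply der_upow.
Qed.

Lemma rhof_psol k r : 3 < k -> rhof k (psol k r) = rhoe k (etar k r).
Proof. intros Hk. unfold rhof, psol. rewrite etaf_PP; auto. apply Rpower_pos. Qed.

Lemma aa_k k : 3 < k -> aa k * (k - 1) = 1.
Proof. intros Hk. unfold aa. field. lra. Qed.

Lemma sol_ode k r : 3 < k -> 0 < r ->
  is_derive (msol k) r (4 * PI * r ^ 2 * rhof k (psol k r)) /\
  is_derive (psol k) r (- (msol k r * rhof k (psol k r)) / r ^ 2).
Proof.
  intros Hk Hr. rewrite rhof_psol by auto. split.
  - eapply der_eq. apply der_msol.
    unfold rhoe, etar. rewrite !Rpower_mult.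
    pose proof (aa_k k Hk).
    replace (- aa k * k) with (- aa k - 1) by (replace (- aa k * k) with (- (aa k * (k-1)) - aa k) by ring; lra).
    replace (- aa k * (2*k-1)) with (- aa k - 1 - 1) by (replace (- aa k * (2*k-1)) with (- 2 * (aa k * (k-1)) - aa k) by ring; lra).
    assert (E : Rpower (1 + r^2) (- aa k - 1) = Rpower (1 + r^2) (- aa k - 1 - 1) * (1 + r^2)).
    { rewrite <- Rpower_S by apply u_pos. f_equal; ring. }
    rewrite E. unfold AA, BB, cc. field. pose proof PI_RGT_0; lra.
  - eapply der_eq. apply der_psol; auto.
    unfold msol. field. lra.
Qed.

Lemma filter_le_right0 : filter_le (at_right 0) (locally 0).
Proof. intros P [e H]. exists e. intros y Hy _. apply H; auto. Qed.

Lemma msol_lim k : filterlim (msol k) (at_right 0) (locally 0).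
Proof.
  apply (filterlim_filter_le_1 (msol k) filter_le_right0).
  replace 0 with (msol k 0) at 2 by (unfold msol; ring).
  apply (ex_derive_continuous (msol k)). eexists. apply der_msol.
Qed.

Lemma psol_lim k : 3 < k -> filterlim (psol k) (at_right 0) (locally (psol k 0)).
Proof.
  intros Hk. apply (filterlim_filter_le_1 (psol k) filter_le_right0).
  apply (ex_derive_continuous (psol k)). eexists. apply der_psol; auto.
Qed.

Theorem theorem4 :
  forall n0 : R, 3 < n0 ->
  exists (rho eta nf : R -> R) (n1 : R),
    barotropic_eos rho eta /\
    index_function rho eta nf /\
    asymptotically_polytropic nf n0 n1 /\
    exists (m p : R -> R) (pc : R),
      regular_solution_on_halfline rho m p pc /\
      (forall r, 0 < r -> 0 < p r).
Proof.
  intros k Hk.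
  exists (rhof k), (etaf k), (nff k), (2*k-1).
  split; [|split; [|split]].
  - split.
    + intros p Hp. apply rhoe_pos; auto.
    + intros p Hp. apply gen_int; auto.
  - exists (rhoe k). split; [|split; [|split]].
    + intros p Hp. reflexivity.
    + intros x Hx. exists (PP k x). split. apply PP_pos; auto. apply etaf_PP; auto.
    + intros x Hx. apply rhoe_cont; auto.
    + exists nil. intros x Hx _. apply rhoe_index; auto.
  - apply nff_asym; auto.
  - exists (msol k), (psol k), (psol k 0). split.
    + split; [apply PP_pos; auto|split; [|split]].
      * intros r Hr. apply sol_ode; auto.
      * apply msol_lim.
      * apply psol_lim; auto.
    + intros r Hr. apply PP_pos; auto.
Qed.
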